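(* Let $q$ be a root of unity with $q^8\ne1$, $N=\mathrm{ord}(q^4)$, $\epsilon=q^{N^2}$. Let $z_0\in\mathbb C$ and $\sigma\in\mathbb C^\times$ with $\epsilon^2z_0=\sigma^N+\sigma^{-N}\ne\pm2$, let $\vec w\in\mathbb C^4$ and $(\vec s,\vec t)\in E^0_{\sigma,\vec w}$. Let $V$ have basis $\{v_i:i\in\mathbb Z/N\}$ and $$d_i=\frac{\lambda_ic_1+(q^2+q^{-2})c_\infty}{\hat\lambda'_i\hat\lambda'_{i-1}},\qquad d'_i=\frac{\lambda_ic_\infty+(q^2+q^{-2})c_1}{\hat\lambda'_i\hat\lambda'_{i-1}},$$ where $c_1=w_1w_3+w_2w_4$, $c_\infty=w_1w_4+w_2w_3$. Then $\rho(p_j)=w_j$ ($j=1,\dots,4$), $\rho(\alpha_0)v_i=\lambda_iv_i$, $\rho(\alpha_1)v_i=q^{4i+2}\sigma s_iv_{i+1}+d'_iv_i+q^{-4i+2}\sigma^{-1}t_{i-1}v_{i-1}$, $\rho(\alpha_\infty)v_i=s_iv_{i+1}+d_iv_i+t_{i-1}v_{i-1}$ define a representation $\rho:\mathcal S_q(\Sigma_{0,4})\to\mathrm{End}(V)$ (i.e. a representation of the sliced algebra $\mathcal S_q(\Sigma_{0,4})/\langle p_j-w_j\rangle$), and $\rho(A_0)=z_0\,\mathrm{id}_V$.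
   Context: $\mathcal S_q(\Sigma_{0,4})$ is the Kauffman bracket skein algebra of the four-punctured sphere, with central peripheral curves $p_1,\dots,p_4$ and curves $\alpha_0,\alpha_1,\alpha_\infty$ separating punctures as $\{1,2\}|\{3,4\}$, $\{1,3\}|\{2,4\}$, $\{1,4\}|\{2,3\}$. With $\gamma=p_1p_2p_3p_4+\sum p_i^2$, $c_0=p_1p_2+p_3p_4$, $c_1=p_1p_3+p_2p_4$, $c_\infty=p_1p_4+p_2p_3$, $H(x,y,z;a,b,c,g)=x^2+y^2+z^2-xzy+ax+by+cz+g$, it is generated over $\mathbb C[p_1,\dots,p_4]$ by $\alpha_0,\alpha_1,\alpha_\infty$ with relations $H(q^2\alpha_0,q^2\alpha_1,q^{-2}\alpha_\infty;c_0,c_1,c_\infty,\gamma)=(q^2+q^{-2})^2$, $q^2\alpha_0\alpha_\infty-q^{-2}\alpha_\infty\alpha_0=(q^4-q^{-4})\alpha_1+(q^2-q^{-2})c_1$, $q^2\alpha_1\alpha_0-q^{-2}\alpha_0\alpha_1=(q^4-q^{-4})\alpha_\infty+(q^2-q^{-2})c_\infty$, $q^2\alpha_\infty\alpha_1-q^{-2}\alpha_1\alpha_\infty=(q^4-q^{-4})\alpha_0+(q^2-q^{-2})c_0$. $A_0=\epsilon^2T_N(\alpha_0)$ with $T_N$ the Chebyshev polynomial ($T_N(t+t^{-1})=t^N+t^{-N}$). Notation: $\kappa(a,b,c)=a^2+b^2+c^2+abc-4$; $\lambda_i=q^{4i}\sigma+q^{-4i}\sigma^{-1}$, $\lambda'_i=q^{4i+2}\sigma+q^{-4i-2}\sigma^{-1}$,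 $\hat\lambda_i=q^{4i}\sigma-q^{-4i}\sigma^{-1}$, $\hat\lambda'_i=q^{4i+2}\sigma-q^{-4i-2}\sigma^{-1}$ (indices in $\mathbb Z/N$); $r_i(\sigma,\vec w)=\dfrac{\kappa(w_1,w_2,\lambda'_i)\kappa(w_3,w_4,\lambda'_i)}{\hat\lambda_i\hat\lambda_{i+1}(\hat\lambda'_i)^2}$; $E^0_{\sigma,\vec w}=\{(s_1,\dots,s_N,t_1,\dots,t_N)\in\mathbb C^{2N}:s_it_i=r_i(\sigma,\vec w)\ \forall i\}$. These representations are called type-$0$. *)

(* Defs.v *)
From HB Require Import structures.
From mathcomp Require Import all_boot all_order all_algebra.
From mathcomp Require Import reals complex.
Set Implicit Arguments. Unset Strict Implicit. Unset Printing Implicit Defensive.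
Import Order.TTheory GRing.Theory Num.Theory.
Local Open Scope ring_scope.

(* The complex numbers are modelled as R[i] for a real number field R : realType
   (any realType is (isomorphic to) the reals). *)

Section Skein.
Variable C : comNzRingType.

(* Chebyshev polynomial T_k evaluated at a square matrix A (acting on column
   vectors): T_0 = 2, T_1 = x, T_(k+1) = x T_k - T_(k-1); equivalently
   T_k(t + t^-1) = t^k + t^-k. *)
Fixpoint chebT_pair (n : nat) (A : 'M[C]_n) (k : nat) : 'M[C]_n * 'M[C]_n :=
  match k with
  | 0 => (2%:M, A)
  | k'.+1 => let (a, b) := chebT_pair A k' in (b, A *m b - a)
  end.
Definition chebT_mx (n : nat) (A : 'M[C]_n) (k : nat) : 'M[C]_n :=
  (chebT_pair A k).1.

(* Central elements of the sliced algebra, with p_j specialized to w_j. *)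
Definition sk_gamma (w1 w2 w3 w4 : C) := w1 * w2 * w3 * w4 + (w1^+2 + w2^+2 + w3^+2 + w4^+2).
Definition sk_c0 (w1 w2 w3 w4 : C) := w1 * w2 + w3 * w4.
Definition sk_c1 (w1 w2 w3 w4 : C) := w1 * w3 + w2 * w4.
Definition sk_cinf (w1 w2 w3 w4 : C) := w1 * w4 + w2 * w3.

Definition skH (n : nat) (x y z : 'M[C]_n) (a b c g : C) : 'M[C]_n :=
  x *m x + y *m y + z *m z - x *m z *m y + a *: x + b *: y + c *: z + g%:M.

End Skein.

Section SkeinField.
Variable C : fieldType.

(* The images (A0, A1, Ainf) of (alpha_0, alpha_1, alpha_infty) together with
   p_j |-> w_j id define a representation of S_q(Sigma_{0,4}) (i.e. of its
   quotient by <p_j - w_j>) iff they satisfy the defining relations of the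
   presentation of S_q(Sigma_{0,4}) over C[p_1,...,p_4]. *)
Definition skein04_rep (q w1 w2 w3 w4 : C) (n : nat) (A0 A1 Ainf : 'M[C]_n) : Prop :=
  let c0 := sk_c0 w1 w2 w3 w4 in
  let c1 := sk_c1 w1 w2 w3 w4 in
  let cinf := sk_cinf w1 w2 w3 w4 in
  let g := sk_gamma w1 w2 w3 w4 in
  [/\ skH (q^+2 *: A0) (q^+2 *: A1) (q^-2 *: Ainf) c0 c1 cinf g
        = ((q^+2 + q^-2)^+2)%:M,
      q^+2 *: (A0 *m Ainf) - q^-2 *: (Ainf *m A0)
        = (q^+4 - q^-4) *: A1 + ((q^+2 - q^-2) * c1)%:M,
      q^+2 *: (A1 *m A0) - q^-2 *: (A0 *m A1)
        = (q^+4 - q^-4) *: Ainf + ((q^+2 - q^-2) * cinf)%:M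
    & q^+2 *: (Ainf *m A1) - q^-2 *: (A1 *m Ainf)
        = (q^+4 - q^-4) *: A0 + ((q^+2 - q^-2) * c0)%:M].

Definition kappa (a b c : C) := a^+2 + b^+2 + c^+2 + a * b * c - 4.

(* For an index i (in Z/N, represented by a natural number; the quantities
   below only depend on i mod N since q^(4N) = 1):
   lambda_i = q^(4i) s + q^(-4i) s^-1, etc. *)
Definition lam (q s : C) (i : nat) := q^+(4 * i) * s + (q^+(4 * i))^-1 * s^-1.
Definition lamp (q s : C) (i : nat) := q^+(4 * i+2) * s + (q^+(4 * i+2))^-1 * s^-1.
Definition lamh (q s : C) (i : nat) := q^+(4 * i) * s - (q^+(4 * i))^-1 * s^-1.
Definition lamph (q s : C) (i : nat) := q^+(4 * i+2) * s - (q^+(4 * i+2))^-1 * s^-1.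

Definition r_i (N : nat) (q s w1 w2 w3 w4 : C) (i : 'I_N) :=
  kappa w1 w2 (lamp q s i) * kappa w3 w4 (lamp q s i)
  / (lamh q s i * lamh q s (ordS i) * (lamph q s i)^+2).

Definition in_E0 (N : nat) (q sig w1 w2 w3 w4 : C) (s t : 'I_N -> C) : Prop :=
  forall i : 'I_N, s i * t i = r_i q sig w1 w2 w3 w4 i.

Definition d_i (N : nat) (q sig w1 w2 w3 w4 : C) (i : 'I_N) :=
  (lam q sig i * sk_c1 w1 w2 w3 w4 + (q^+2 + q^-2) * sk_cinf w1 w2 w3 w4)
  / (lamph q sig i * lamph q sig (ord_pred i)).
Definition d'_i (N : nat) (q sig w1 w2 w3 w4 : C) (i : 'I_N) :=
  (lam q sig i * sk_cinf w1 w2 w3 w4 + (q^+2 + q^-2) * sk_c1 w1 w2 w3 w4)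
  / (lamph q sig i * lamph q sig (ord_pred i)).

(* Matrices in the basis (v_i)_{i in Z/N}, entry (j, i) = coefficient of v_j
   in rho(.) v_i (matrices act on column vectors). *)
Definition rho_a0 (N : nat) (q sig : C) : 'M[C]_N :=
  \matrix_(j, i) (if j == i then lam q sig i else 0).
Definition rho_a1 (N : nat) (q sig w1 w2 w3 w4 : C) (s t : 'I_N -> C) : 'M[C]_N :=
  \matrix_(j, i)
    ((if j == ordS i then q^+(4 * i+2) * sig * s i else 0)
     + (if j == i then d'_i q sig w1 w2 w3 w4 i else 0)
     + (if j == ord_pred i then q^+2 / q^+(4 * i) * sig^-1 * t (ord_pred i) else 0)).
Definition rho_ainf (N : nat) (q sig w1 w2 w3 w4 : C) (s t : 'I_N -> C) : 'M[C]_N :=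
  \matrix_(j, i)
    ((if j == ordS i then s i else 0)
     + (if j == i then d_i q sig w1 w2 w3 w4 i else 0)
     + (if j == ord_pred i then t (ord_pred i) else 0)).

End SkeinField.

(* Main.v *)
Require Import Defs.
From HB Require Import structures.
From mathcomp Require Import all_boot all_order all_algebra.
From mathcomp Require Import reals complex.
From mathcomp Require Import ring lra.
Import Order.TTheory GRing.Theory Num.Theory.
Local Open Scope ring_scope.
Set Implicit Arguments. Unset Strict Implicit.
Section S.
Variable C : fieldType.
Variable N : nat.

Definition tri (f g h : 'I_N -> C) : 'M[C]_N :=
  \matrix_(j, i) ((if j == ordS i then f i else 0) + (if j == i then g i else 0)
     + (if j == ord_pred i then h i else 0)).

Lemma sum_if (F : 'I_N -> C) x c : \sum_k F k * (if k == x then c else 0) = F x * c.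
Proof.
rewrite (bigD1 x) //= eqxx big1 ?addr0 // => k /negbTE ->; by rewrite mulr0.
Qed.

Lemma mul_tri (A : 'M[C]_N) f g h j i :
  (A *m tri f g h) j i = A j (ordS i) * f i + A j i * g i + A j (ord_pred i) * h i.
Proof.
rewrite mxE; under eq_bigr => k _ do rewrite mxE !mulrDr.
by rewrite !big_split /= !sum_if.
Qed.

Lemma mul_dg (A : 'M[C]_N) (f : 'I_N -> C) j i :
  (A *m \matrix_(j, i) (if j == i then f i else 0)) j i = A j i * f i.
Proof.
rewrite mxE; under eq_bigr => k _ do rewrite mxE.
by rewrite sum_if.
Qed.
End S.

Section Q.
Variable C : fieldType.

Lemma qmod (N : nat) (q : C) (hq : q^+(4 * N) = 1) m : q^+(4 * (m %% N)) = q^+(4 * m).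
Proof.
by rewrite {2}(divn_eq m N) mulnDr exprD (mulnC (m %/ N)%N) mulnA [q ^+ (4 * N * _)]exprM hq expr1n mul1r.
Qed.

Lemma qS (N : nat) (q : C) (hq : q^+(4 * N) = 1) (k : 'I_N) : q^+(4 * ordS k) = q^+(4 * k) * q^+4.
Proof. by rewrite /= qmod // mulnSr exprD. Qed.

Lemma qP (N : nat) (q : C) (hq : q^+(4 * N) = 1) (q0 : q != 0) (k : 'I_N) :
  q^+(4 * ord_pred k) = q^+(4 * k) / q^+4.
Proof.
apply: (canRL (mulfK _)); first by rewrite expf_neq0.
rewrite /= qmod // -exprD -mulnSr prednK; last by rewrite addn_gt0 (leq_trans _ (ltn_ord k)) ?orbT.
by rewrite mulnDr exprD hq mulr1.
Qed.
End Q.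

Section NZ.
Variable C : fieldType.
Lemma nz_aux (N:nat) (x sig : C) : x^+(2 * N) = 1 -> sig != 0 ->
  sig^+N + sig^-N != 2 -> sig^+N + sig^-N != -2 -> x * sig - x^-1 * sig^-1 != 0.
Proof.
move=> hx s0 h2 hm2; apply/negP => /eqP e.
case: N hx h2 hm2 => [|N] hx h2 hm2; first by rewrite expr0 invr1 eqxx in h2.
have x0 : x != 0.
  apply/negP => /eqP x0; move: hx; rewrite x0 expr0n muln_eq0 /= => /eqP; by rewrite eq_sym oner_eq0.
have xs0 : x * sig != 0 by rewrite mulf_neq0.
have e2 : (x * sig)^+2 = 1.
  move/eqP: e; rewrite subr_eq0 -invfM => /eqP e.
  by rewrite expr2 {2}e mulfV.
have : (sig ^+ N.+1)^+2 = 1.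
  by rewrite -exprM mulnC -[sig ^+ _]mul1r -hx -exprMn exprM e2 expr1n.
move/eqP; rewrite sqrf_eq1 => /orP[] /eqP hu.
  by apply: (negP h2); apply/eqP; rewrite hu invr1; ring.
by apply: (negP hm2); apply/eqP; rewrite hu invrN1; ring.
Qed.

Lemma nzgen (N : nat) (sig m v : C) : sig != 0 -> sig^+N + sig^-N != 2 -> sig^+N + sig^-N != -2 ->
  v != 0 -> m^+(2 * N) = v^+(2 * N) -> m * sig * (m * sig) - v * v != 0.
Proof.
move=> s0 h2 hm2 v0 hm.
case: N h2 hm2 hm => [|n] h2 hm2 hm.
  by exfalso; apply: (negP h2); apply/eqP; rewrite expr0 invr1; ring.
have v2 : v ^+ (2 * n.+1) != 0 by rewrite expf_neq0.
have := nz_aux (N := n.+1) (x := m / v) _ s0 h2 hm2.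
rewrite exprMn exprVn hm mulfV // => /(_ erefl) hx.
have m0 : m != 0.
  apply/negP=> /eqP m0; move: hm; rewrite m0 expr0n.
  by rewrite muln_eq0 /= => e; move: v2; rewrite -e eqxx.
have -> : m * sig * (m * sig) - v * v = (m / v * sig - (m / v)^-1 * sig^-1) * (m / v * sig * (v * v)).
  by field; rewrite v0 s0 m0.
by rewrite mulf_neq0 // !mulf_neq0 ?invr_neq0.
Qed.
Lemma nzgen1 (N : nat) (sig m : C) : sig != 0 -> sig^+N + sig^-N != 2 -> sig^+N + sig^-N != -2 ->
  m^+(2 * N) = 1 -> m * sig * (m * sig) - 1 != 0.
Proof.
move=> s0 h2 hm2 hm; have := nzgen s0 h2 hm2 (oner_neq0 C) (m := m).
by rewrite expr1n mulr1 => ->.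
Qed.
End NZ.

Lemma natr (a b : nat) : (4 * a * (2 * b) = 4 * b * (2 * a))%N.
Proof. by rewrite -!mulnA; congr (_ * _)%N; rewrite mulnCA [(b * _)%N]mulnCA (mulnC a). Qed.

Section Aux.
Variable C : fieldType.
Lemma ifE (b : bool) (x : C) : (if b then x else 0) = b%:R * x.
Proof. by case: b; rewrite ?mul1r ?mul0r. Qed.
Lemma ifT (x y : C) : (if true then x else y) = x. Proof. by []. Qed.
Lemma ifF (x y : C) : (if false then x else y) = y. Proof. by []. Qed.
Lemma natbE (b : bool) (x : C) : x *+ b = b%:R * x.
Proof. by rewrite mulr_natl. Qed.
Lemma e42 (q : C) k : q ^+ (4 * k + 2) = q ^+ (4 * k) * q ^+ 2.
Proof. by rewrite exprD. Qed.
Variable N : nat.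
Lemma ordS_val (i : 'I_N) : val (ordS i) = (i.+1 %% N)%N.
Proof. by []. Qed.
Lemma neqS (hN : (2 < N)%N) (i : 'I_N) : (i == ordS i) = false.
Proof.
apply/negbTE; rewrite -val_eqE /=; have hi := ltn_ord i.
have [e|ne] := eqVneq (i.+1) N.
  by rewrite e modnn; apply/eqP=> h; move: hN; rewrite -e h.
rewrite modn_small; first by rewrite neq_ltn ltnSn.
by rewrite ltn_neqAle ne hi.
Qed.
Lemma neqSS (hN : (2 < N)%N) (i : 'I_N) : (i == ordS (ordS i)) = false.
Proof.
apply/negbTE; rewrite -val_eqE /= -[(_ %% N).+1]addn1 modnDml addn1; have hi := ltn_ord i.
have [e|ne] := eqVneq (i.+2) N.
  by rewrite -addn2 -addn2 in e *; rewrite e modnn; apply/eqP=> h; move: hN; rewrite -e h.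
have [e1|ne1] := eqVneq (i.+1) N.
  have -> : (i.+2 %% N = 1)%N by rewrite -[i.+2]addn1 e1 modnDl modn_small // (ltn_trans _ hN).
  by apply/eqP => h; move: hN; rewrite -e1 h.
rewrite modn_small; first by rewrite neq_ltn (ltn_trans (ltnSn i) (ltnSn _)).
by rewrite ltn_neqAle ne /= ltn_neqAle ne1 hi.
Qed.
Lemma neqP (hN : (2 < N)%N) (i : 'I_N) : (i == ord_pred i) = false.
Proof. by rewrite -(inj_eq (@ordS_inj N)) ord_predK eq_sym neqS. Qed.
Lemma neqPP (hN : (2 < N)%N) (i : 'I_N) : (i == ord_pred (ord_pred i)) = false.
Proof. by rewrite -(inj_eq (@ordS_inj N)) -(inj_eq (@ordS_inj N)) !ord_predK eq_sym neqSS. Qed.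
End Aux.

Ltac powtac hs := repeat (rewrite ?hs ?expr1n ?mul1r ?mulr1 ?invr1; (rewrite exprMn || rewrite exprVn)); rewrite ?hs ?expr1n ?mul1r ?mulr1 ?invr1.
Ltac nz1 N hs :=
  rewrite ?mulNr;
  first [ done
        | (apply: expf_neq0; done)
        | apply: (nzgen1 (N := N)) => //; powtac hs; done
        | apply: (nzgen (N := N)) => //; [repeat (apply: mulf_neq0 || apply: expf_neq0 || apply: invr_neq0); done | powtac hs; done] ].
Ltac nzc N hs := repeat (apply/andP; split); nz1 N hs.

Section Rel.
Variable C : fieldType.
Variable N : nat.

Lemma powX (q : C) (hq : q^+(4 * N) = 1) (i : nat) : (q ^+ (4 * i))^+(2 * N) = 1.
Proof. by rewrite -exprM natr exprM hq expr1n. Qed.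

Lemma st_subst (L R : C -> C -> C) x y r : x * y = r ->
  (forall a b, L a b - R a b = L 1 (a * b) - R 1 (a * b)) -> L 1 r = R 1 r -> L x y = R x y.
Proof. by move=> <- h e; apply/eqP; rewrite -subr_eq0 h e subrr. Qed.

Local Ltac stsub a b h := match goal with |- ?L = ?R =>
  let L' := eval pattern a, b in L in let R' := eval pattern a, b in R in
  match L' with ?FL _ _ => match R' with ?FR _ _ =>
    apply: (st_subst (L := FL) (R := FR) h); [move=> ? ?; rewrite /=; ring | rewrite /=] end end end.

Local Ltac expo N q hq q0 i :=
  rewrite /r_i /kappa /d_i /d'_i /lam /lamp /lamh /lamph /sk_c0 /sk_c1 /sk_cinf /sk_gamma
     ?ord_predK ?ordSK !e42 ?(qS hq) ?(qP hq q0).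

Local Ltac rel_fin N q hq q0 hE j i hq2 hq4 s t :=
  case: (eqVneq j i) => [->|nji];
  [ rewrite ?eqxx ?neqS ?neqP ?neqSS ?neqPP // ?ifT ?ifF ?mulr1n ?mulr0n;
    try stsub (s i) (t i) (hE i);
    try stsub (s (ord_pred i)) (t (ord_pred i)) (hE (ord_pred i));
    expo N q hq q0 i; field; nzc N (powX hq i, hq2, hq4)
  | rewrite ?mulr0n;
    repeat match goal with |- context [if ?b then _ else _] => case: b end;
    rewrite ?ifT ?ifF; expo N q hq q0 i; field; nzc N (powX hq i, hq2, hq4) ].

Lemma ainf_tri (q sig w1 w2 w3 w4 : C) (s t : 'I_N -> C) :
  rho_ainf q sig w1 w2 w3 w4 s t = tri s (d_i q sig w1 w2 w3 w4) (fun i => t (ord_pred i)).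
Proof. by []. Qed.
Lemma a1_tri (q sig w1 w2 w3 w4 : C) (s t : 'I_N -> C) :
  rho_a1 q sig w1 w2 w3 w4 s t = tri (fun i => q^+(4 * i+2) * sig * s i) (d'_i q sig w1 w2 w3 w4)
     (fun i => q^+2 / q^+(4 * i) * sig^-1 * t (ord_pred i)).
Proof. by []. Qed.

Lemma rel1 (q sig w1 w2 w3 w4 : C) (s t : 'I_N -> C) : (2 < N)%N -> q^+(4 * N) = 1 -> q != 0 -> sig != 0 ->
  sig^+N + sig^-N != 2 -> sig^+N + sig^-N != -2 -> in_E0 q sig w1 w2 w3 w4 s t ->
  let A0 := rho_a0 N q sig in let A1 := rho_a1 q sig w1 w2 w3 w4 s t in
  let Ainf := rho_ainf q sig w1 w2 w3 w4 s t in
  skH (q^+2 *: A0) (q^+2 *: A1) (q^-2 *: Ainf) (sk_c0 w1 w2 w3 w4) (sk_c1 w1 w2 w3 w4)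
      (sk_cinf w1 w2 w3 w4) (sk_gamma w1 w2 w3 w4) = ((q^+2 + q^-2)^+2)%:M.
Proof.
move=> hN hq q0 s0 h2 hm2 hE A0 A1 Ainf.
have hq2 : (q ^+ 2)^+(2 * N) = 1 by rewrite -exprM mulnA hq.
have hq4 : (q ^+ 4)^+(2 * N) = 1.
  have e4 : (4 * (2 * N) = 4 * N * 2)%N by rewrite mulnCA mulnC.
  by rewrite -exprM e4 exprM hq expr1n.
rewrite /skH /A1 /Ainf a1_tri ainf_tri /A0 /rho_a0 -?scalemxAl -?scalemxAr.
apply/matrixP => j i; rewrite !(mul_tri, mul_dg, mxE) ?ordSK ?ord_predK.
rel_fin N q hq q0 hE j i hq2 hq4 s t.
Qed.

Lemma rel2 (q sig w1 w2 w3 w4 : C) (s t : 'I_N -> C) : (2 < N)%N -> q^+(4 * N) = 1 -> q != 0 -> sig != 0 ->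
  sig^+N + sig^-N != 2 -> sig^+N + sig^-N != -2 -> in_E0 q sig w1 w2 w3 w4 s t ->
  let A0 := rho_a0 N q sig in let A1 := rho_a1 q sig w1 w2 w3 w4 s t in
  let Ainf := rho_ainf q sig w1 w2 w3 w4 s t in
  q^+2 *: (A0 *m Ainf) - q^-2 *: (Ainf *m A0)
        = (q^+4 - q^-4) *: A1 + ((q^+2 - q^-2) * sk_c1 w1 w2 w3 w4)%:M.
Proof.
move=> hN hq q0 s0 h2 hm2 hE A0 A1 Ainf.
have hq2 : (q ^+ 2)^+(2 * N) = 1 by rewrite -exprM mulnA hq.
have hq4 : (q ^+ 4)^+(2 * N) = 1.
  have e4 : (4 * (2 * N) = 4 * N * 2)%N by rewrite mulnCA mulnC.
  by rewrite -exprM e4 exprM hq expr1n.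
rewrite /A1 /Ainf a1_tri ainf_tri /A0 /rho_a0 -?scalemxAl -?scalemxAr.
apply/matrixP => j i; rewrite !(mul_tri, mul_dg, mxE) ?ordSK ?ord_predK.
rel_fin N q hq q0 hE j i hq2 hq4 s t.
Qed.

Lemma rel3 (q sig w1 w2 w3 w4 : C) (s t : 'I_N -> C) : (2 < N)%N -> q^+(4 * N) = 1 -> q != 0 -> sig != 0 ->
  sig^+N + sig^-N != 2 -> sig^+N + sig^-N != -2 -> in_E0 q sig w1 w2 w3 w4 s t ->
  let A0 := rho_a0 N q sig in let A1 := rho_a1 q sig w1 w2 w3 w4 s t in
  let Ainf := rho_ainf q sig w1 w2 w3 w4 s t in
  q^+2 *: (A1 *m A0) - q^-2 *: (A0 *m A1)
        = (q^+4 - q^-4) *: Ainf + ((q^+2 - q^-2) * sk_cinf w1 w2 w3 w4)%:M.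
Proof.
move=> hN hq q0 s0 h2 hm2 hE A0 A1 Ainf.
have hq2 : (q ^+ 2)^+(2 * N) = 1 by rewrite -exprM mulnA hq.
have hq4 : (q ^+ 4)^+(2 * N) = 1.
  have e4 : (4 * (2 * N) = 4 * N * 2)%N by rewrite mulnCA mulnC.
  by rewrite -exprM e4 exprM hq expr1n.
rewrite /A1 /Ainf a1_tri ainf_tri /A0 /rho_a0 -?scalemxAl -?scalemxAr.
apply/matrixP => j i; rewrite !(mul_tri, mul_dg, mxE) ?ordSK ?ord_predK.
rel_fin N q hq q0 hE j i hq2 hq4 s t.
Qed.

Lemma rel4 (q sig w1 w2 w3 w4 : C) (s t : 'I_N -> C) : (2 < N)%N -> q^+(4 * N) = 1 -> q != 0 -> sig != 0 ->
  sig^+N + sig^-N != 2 -> sig^+N + sig^-N != -2 -> in_E0 q sig w1 w2 w3 w4 s t ->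
  let A0 := rho_a0 N q sig in let A1 := rho_a1 q sig w1 w2 w3 w4 s t in
  let Ainf := rho_ainf q sig w1 w2 w3 w4 s t in
  q^+2 *: (Ainf *m A1) - q^-2 *: (A1 *m Ainf)
        = (q^+4 - q^-4) *: A0 + ((q^+2 - q^-2) * sk_c0 w1 w2 w3 w4)%:M.
Proof.
move=> hN hq q0 s0 h2 hm2 hE A0 A1 Ainf.
have hq2 : (q ^+ 2)^+(2 * N) = 1 by rewrite -exprM mulnA hq.
have hq4 : (q ^+ 4)^+(2 * N) = 1.
  have e4 : (4 * (2 * N) = 4 * N * 2)%N by rewrite mulnCA mulnC.
  by rewrite -exprM e4 exprM hq expr1n.
rewrite /A1 /Ainf a1_tri ainf_tri /A0 /rho_a0 -?scalemxAl -?scalemxAr.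
apply/matrixP => j i; rewrite !(mul_tri, mul_dg, mxE) ?ordSK ?ord_predK.
rel_fin N q hq q0 hE j i hq2 hq4 s t.
Qed.

End Rel.


Section Cheb.
Variable C : fieldType.
Lemma cheb_dg n (a : 'I_n -> C) (ha : forall i, a i != 0) k :
  chebT_pair (\matrix_(j, i) (if j == i then a i + (a i)^-1 else 0)) k =
  (\matrix_(j, i) (if j == i then a i ^+ k + (a i ^+ k)^-1 else 0),
   \matrix_(j, i) (if j == i then a i ^+ k.+1 + (a i ^+ k.+1)^-1 else 0)).
Proof.
elim: k => [|k IH] /=.
  congr pair; apply/matrixP => j i; rewrite !mxE; case: (j == i) => //=;
    rewrite ?expr0 ?expr1 ?invr1 //; ring.
rewrite IH; congr pair; apply/matrixP => j i; rewrite !(mul_dg, mxE).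
have ai := ha i.
case: (j == i) => /=; last by rewrite mul0r subr0.
rewrite !exprS; by field; rewrite ai expf_neq0.
Qed.
End Cheb.

Unset Implicit Arguments.
Theorem mainTheorem17 (R : realType) (q : R[i]) (N : nat)
    (z0 sig w1 w2 w3 w4 : R[i]) (s t : 'I_N -> R[i]) :
  (exists n : nat, (0 < n)%N /\ q ^+ n = 1) ->
  q ^+ 8 != 1 ->
  N.-primitive_root (q ^+ 4) ->
  sig != 0 ->
  (q ^+ (N * N)) ^+ 2 * z0 = sig ^+ N + sig ^- N ->
  sig ^+ N + sig ^- N != 2 ->
  sig ^+ N + sig ^- N != - 2 ->
  in_E0 q sig w1 w2 w3 w4 s t ->
  skein04_rep q w1 w2 w3 w4
    (rho_a0 N q sig) (rho_a1 q sig w1 w2 w3 w4 s t) (rho_ainf q sig w1 w2 w3 w4 s t)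
  /\ (q ^+ (N * N)) ^+ 2 *: chebT_mx (rho_a0 N q sig) N = z0%:M.
Proof.
move=> _ hq8 prim s0 hz h2 hm2 hE.
have N0 : (0 < N)%N := prim_order_gt0 prim.
have hq : q ^+ (4 * N) = 1 by rewrite exprM (prim_expr_order prim).
have q0 : q != 0.
  apply/negP => /eqP q0; move: hq; rewrite q0 expr0n muln_eq0 /=.
  rewrite eqn0Ngt N0 /= => /eqP; by rewrite eq_sym oner_eq0.
have hN : (2 < N)%N.
  rewrite ltnNge; apply/negP => hle.
  have : (N == 1)%N || (N == 2)%N by move: N0 hle; case: (N) => [|[|[|]]].
  case/orP => /eqP eN; move: hq; rewrite eN => hq; apply: (negP hq8).
    by rewrite (_ : 8 = 4 * 1 * 2)%N // exprM hq expr1n.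
  by rewrite hq.
split.
  split.
  - exact: (rel1 hN hq q0 s0 h2 hm2 hE).
  - exact: (rel2 hN hq q0 s0 h2 hm2 hE).
  - exact: (rel3 hN hq q0 s0 h2 hm2 hE).
  - exact: (rel4 hN hq q0 s0 h2 hm2 hE).
have -> : rho_a0 N q sig = \matrix_(j, i) (if j == i then (q ^+ (4 * i) * sig) + (q ^+ (4 * i) * sig)^-1 else 0).
  by apply/matrixP => j i; rewrite !mxE /lam invfM.
rewrite /chebT_mx cheb_dg /=; last by move=> i; rewrite mulf_neq0 // expf_neq0.
apply/matrixP => j i; rewrite !mxE.
have hs : (q ^+ (4 * i) * sig) ^+ N = sig ^+ N.
  by rewrite exprMn -exprM mulnAC exprM hq expr1n mul1r.
rewrite hs; case: (j == i) => /=; last by rewrite mulr0 mulr0n.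
rewrite mulr1n -hz mulrA -exprD.
have -> : (q ^+ (N * N)) ^+ (2 + 2) = 1.
  have e : (N * N * (2 + 2) = 4 * N * N)%N by rewrite mulnC mulnA.
  by rewrite -exprM e exprM hq expr1n.
by rewrite mul1r.
Qed.
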